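(* The function $H:\mathbb{R}\to\mathbb{R}$, $H(x)=\psi'(x)\big(c-\tilde{R}(x,\bar{y})\big)+(\rho+\kappa)^{-1}\psi(x)$, has exactly one zero $\tilde{x}\in\mathbb{R}$.
   Context: Fix constants $\mu\in\mathbb{R}$, $\kappa>0$, $\sigma>0$, $\rho>0$, $\beta>0$, $c\geq0$, $\bar{y}>0$. Let $D_\alpha(x)=\frac{e^{-x^2/4}}{\Gamma(-\alpha)}\int_0^\infty t^{-\alpha-1}e^{-t^2/2-xt}dt$ ($\alpha<0$) be the parabolic cylinder function, and $\psi(x)=e^{\frac{\kappa(x-\mu)^2}{2\sigma^2}}D_{-\rho/\kappa}\big(-\frac{x-\mu}{\sigma}\sqrt{2\kappa}\big)$; $\psi$ is the strictly increasing positive solution of $\frac{\sigma^2}{2}u''+\kappa(\mu-x)u'-\rho u=0$. Let $\tilde{R}(x,y)=\frac{\mu\kappa+\rho x-\beta(\rho+2\kappa)y}{\rho(\rho+\kappa)}$. *)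

(* Defs.v *)
From Stdlib Require Import Reals.
From Coquelicot Require Import Coquelicot.
Open Scope R_scope.

Definition Gamma (s : R) : R :=
  RInt_gen (fun t => Rpower t (s - 1) * exp (- t)) (at_right 0) (Rbar_locally p_infty).

(* Parabolic cylinder function, integral representation (alpha < 0):
   D_alpha(x) = e^{-x^2/4}/Gamma(-alpha) * int_0^oo t^{-alpha-1} e^{-t^2/2 - x t} dt *)
Definition Dpc (alpha x : R) : R :=
  exp (- x ^ 2 / 4) / Gamma (- alpha) *
  RInt_gen (fun t => Rpower t (- alpha - 1) * exp (- t ^ 2 / 2 - x * t))
           (at_right 0) (Rbar_locally p_infty).

Definition psi (mu kappa sigma rho : R) (x : R) : R :=
  exp (kappa * (x - mu) ^ 2 / (2 * sigma ^ 2)) *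
  Dpc (- rho / kappa) (- ((x - mu) / sigma) * sqrt (2 * kappa)).

Definition Rtilde (mu kappa rho beta : R) (x y : R) : R :=
  (mu * kappa + rho * x - beta * (rho + 2 * kappa) * y) / (rho * (rho + kappa)).

Definition Hfun (mu kappa sigma rho beta c ybar : R) (x : R) : R :=
  Derive (psi mu kappa sigma rho) x * (c - Rtilde mu kappa rho beta x ybar)
  + / (rho + kappa) * psi mu kappa sigma rho x.

(* Main.v *)
Require Import Defs.
From Stdlib Require Import Reals Lra FunctionalExtensionality.
From Coquelicot Require Import Coquelicot.
Open Scope R_scope.

Lemma Rpower_derive (y t : R) : 0 < t ->
  is_derive (fun x => Rpower x y) t (y * Rpower t (y - 1)).
Proof. intro Ht. apply is_derive_Reals. now apply derivable_pt_lim_power. Qed.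

Lemma Rpower_cont (y t : R) : 0 < t -> continuous (fun x => Rpower x y) t.
Proof. intro Ht. apply (@ex_derive_continuous R_AbsRing R_NormedModule (fun x => Rpower x y)). eexists. now apply Rpower_derive. Qed.

Lemma Rpower_pos (t y : R) : 0 < Rpower t y.
Proof. unfold Rpower. apply exp_pos. Qed.

Lemma FP (P : R * R -> Prop) :
  (forall a b, 0 < a < 1 -> 1 < b -> P (a, b)) ->
  filter_prod (at_right 0) (Rbar_locally p_infty) P.
Proof.
  intro H. apply Filter_prod with (fun a => 0 < a < 1) (fun b => 1 < b).
  - exists (mkposreal 1 Rlt_0_1). intros y Hy Hp. simpl in *.
    change (Rabs (y - 0) < 1) in Hy. apply Rabs_def2 in Hy. lra.
  - exists 1. auto.
  - intros; auto.
Qed.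

Lemma EX (P : R * R -> Prop) :
  filter_prod (at_right 0) (Rbar_locally p_infty) P ->
  exists a b, 0 < a < 1 /\ 2 < b /\ P (a, b).
Proof.
  intros [Q R' [d Hd] [M HM] H].
  exists (Rmin (d/2) (1/2)), (Rmax (M+1) 3).
  assert (0 < Rmin (d/2) (1/2)).
  { apply Rmin_pos. destruct d; simpl; lra. lra. }
  assert (Rmin (d/2) (1/2) <= 1/2) by apply Rmin_r.
  assert (Rmin (d/2) (1/2) <= d/2) by apply Rmin_l.
  assert (3 <= Rmax (M+1) 3) by apply Rmax_r.
  assert (M+1 <= Rmax (M+1) 3) by apply Rmax_l.
  split. lra. split. lra. apply H.
  - apply Hd. change (Rabs (Rmin (d/2) (1/2) - 0) < d).
    rewrite Rabs_right by lra. destruct d; simpl in *; lra. lra.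
  - apply HM. lra.
Qed.

Lemma bound0 (f : R -> R) (A q a b : R) : -1 < q -> 0 <= A -> 0 < a <= b ->
  (forall t, 0 < t -> continuous f t) ->
  (forall t, a <= t <= b -> Rabs (f t) <= A * Rpower t q) ->
  Rabs (RInt f a b) <= A / (q+1) * Rpower b (q+1).
Proof.
  intros Hq HA Hab Hc Hb.
  assert (Hi : is_RInt f a b (RInt f a b)).
  { apply (RInt_correct (V:=R_CompleteNormedModule)). apply (ex_RInt_continuous (V:=R_CompleteNormedModule)). intros z Hz.
    rewrite Rmin_left in Hz by lra. apply Hc. lra. }
  assert (Hg : is_RInt (fun t => A * Rpower t q) a b
     (minus (A / (q+1) * Rpower b (q+1)) (A / (q+1) * Rpower a (q+1)))).
  { apply (is_RInt_derive (fun t => A / (q+1) * Rpower t (q+1))).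
    - intros x Hx. rewrite Rmin_left in Hx by lra.
      replace (A * Rpower x q) with (A / (q+1) * ((q+1) * Rpower x (q + 1 - 1))).
      apply is_derive_scal. apply Rpower_derive. lra.
      replace (q+1-1) with q by ring. field. lra.
    - intros x Hx. rewrite Rmin_left in Hx by lra.
      apply (continuous_scal_r A (fun t => Rpower t q)). apply Rpower_cont. lra. }
  pose proof (norm_RInt_le f (fun t => A * Rpower t q) a b _ _ (proj2 Hab) Hb Hi Hg) as N. change (Rabs (RInt f a b) <= A / (q + 1) * Rpower b (q + 1) - A / (q + 1) * Rpower a (q + 1)) in N.
  assert (0 <= A / (q + 1) * Rpower a (q + 1)).
  { apply Rmult_le_pos. apply Rdiv_le_0_compat; lra. left; apply Rpower_pos. }
  lra.
Qed.

Lemma boundinf (f : R -> R) (B a b : R) : 0 <= B -> 1 <= a <= b ->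
  (forall t, 0 < t -> continuous f t) ->
  (forall t, a <= t <= b -> Rabs (f t) <= B * exp (- t / 2)) ->
  Rabs (RInt f a b) <= 2 * B * exp (- a / 2).
Proof.
  intros HB Hab Hc Hb.
  assert (Hi : is_RInt f a b (RInt f a b)).
  { apply (RInt_correct (V:=R_CompleteNormedModule)). apply (ex_RInt_continuous (V:=R_CompleteNormedModule)). intros z Hz.
    rewrite Rmin_left in Hz by lra. apply Hc. lra. }
  assert (Hg : is_RInt (fun t => B * exp (- t / 2)) a b
     (minus (-2 * B * exp (- b / 2)) (-2 * B * exp (- a / 2)))).
  { apply (is_RInt_derive (fun t => -2 * B * exp (- t / 2))).
    - intros x Hx. auto_derive. auto. unfold Rdiv. set (E := exp (- x * / 2)). field.
    - intros x Hx. apply (@ex_derive_continuous R_AbsRing R_NormedModule (fun t => B * exp (- t / 2))). auto_derive. auto. }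
  pose proof (norm_RInt_le f (fun t => B * exp (- t / 2)) a b _ _ (proj2 Hab) Hb Hi Hg) as N.
  change (Rabs (RInt f a b) <= -2 * B * exp (- b / 2) - (-2 * B * exp (- a / 2))) in N.
  assert (0 <= B * exp (- b / 2)) by (apply Rmult_le_pos; [lra | left; apply exp_pos]).
  lra.
Qed.
Lemma exR (f : R -> R) a b : (forall t, 0 < t -> continuous f t) -> 0 < a -> 0 < b -> ex_RInt f a b.
Proof.
  intros Hc Ha Hb. apply (ex_RInt_continuous (V:=R_CompleteNormedModule)). intros z Hz.
  apply Hc. assert (0 < Rmin a b) by (apply Rmin_pos; auto). lra.
Qed.

Lemma RInt_sym_bound (f : R -> R) (S : R -> Prop) K :
  (forall t, 0 < t -> continuous f t) -> (forall x, S x -> 0 < x) ->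
  (forall x y, S x -> S y -> x <= y -> Rabs (RInt f x y) <= K) ->
  forall x y, S x -> S y -> Rabs (RInt f x y) <= K.
Proof.
  intros Hc HS H x y Hx Hy. destruct (Rle_lt_dec x y) as [h|h]. auto.
  rewrite <- (opp_RInt_swap f y x) by (apply exR; auto).
  change (Rabs (- RInt f y x) <= K). rewrite Rabs_Ropp. apply H; auto. lra.
Qed.

Lemma Rabs_diff_chasles (f : R -> R) a a' c : (forall t, 0 < t -> continuous f t) ->
  0 < a -> 0 < a' -> 0 < c -> RInt f a' c - RInt f a c = - RInt f a a'.
Proof.
  intros Hc Ha Ha' Hc'.
  pose proof (RInt_Chasles f a a' c (exR f a a' Hc Ha Ha') (exR f a' c Hc Ha' Hc')) as HC.
  change (RInt f a a' + RInt f a' c = RInt f a c) in HC. lra.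
Qed.

Lemma small0 C eps : 0 <= C -> 0 < eps -> C * exp (- (C / eps)) < eps.
Proof.
  intros HC He. pose proof (exp_ineq1_le (C / eps)) as H1.
  rewrite exp_Ropp.
  assert (0 < exp (C/eps)) by apply exp_pos.
  apply (Rmult_lt_reg_r (exp (C/eps))). auto.
  rewrite Rmult_assoc, Rinv_l by lra. rewrite Rmult_1_r.
  assert (C < eps * (1 + C/eps)).
  { replace (eps * (1 + C/eps)) with (eps + C) by (field; repeat split; lra). lra. }
  assert (eps * (1 + C / eps) <= eps * exp (C / eps)) by (apply Rmult_le_compat_l; lra).
  lra.
Qed.

Lemma exp_le_mono x y : x <= y -> exp x <= exp y.
Proof. intro H. destruct (Rle_lt_or_eq_dec x y H) as [h|h]. left; now apply exp_increasing. right; now subst. Qed.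

Lemma ex_gen0 (f : R -> R) A q : -1 < q -> 0 <= A ->
  (forall t, 0 < t -> continuous f t) ->
  (forall t, 0 < t <= 1 -> Rabs (f t) <= A * Rpower t q) ->
  ex_RInt_gen f (at_right 0) (at_point 1).
Proof.
  intros Hq HA Hc Hb. unfold ex_RInt_gen, is_RInt_gen.
  apply (@filterlimi_locally_cauchy _ R_CompleteSpace _
     (@filter_prod_proper _ _ _ _ (at_right_proper_filter 0) (at_point_filter 1))).
  - apply Filter_prod with (fun a => 0 < a) (fun b => b = 1).
    + exists (mkposreal 1 Rlt_0_1). intros y _ Hp. exact Hp.
    + reflexivity.
    + intros x y Hx Hy. subst y. simpl. split.
      * exists (RInt f x 1). apply (RInt_correct (V:=R_CompleteNormedModule)). apply exR; auto; lra.
      * intros y1 y2 H1 H2. apply (is_RInt_unique (V:=R_CompleteNormedModule)) in H1. apply (is_RInt_unique (V:=R_CompleteNormedModule)) in H2. congruence.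
  - intros [eps Heps]. simpl. set (C := A / (q+1)).
    assert (HC : 0 <= C) by (apply Rdiv_le_0_compat; lra).
    set (d := exp (- (C / eps / (q+1)))).
    assert (Hd0 : 0 < d) by apply exp_pos.
    assert (Hd1 : d <= 1).
    { unfold d. apply Rle_trans with (exp 0); [|rewrite exp_0; lra]. apply exp_le_mono.
      assert (0 <= C / eps / (q+1)) by (apply Rdiv_le_0_compat; [apply Rdiv_le_0_compat|]; lra). lra. }
    assert (Hdq : C * Rpower d (q+1) < eps).
    { unfold Rpower, d. rewrite ln_exp.
      replace ((q + 1) * - (C / eps / (q + 1))) with (- (C/eps)) by (field; repeat split; lra).
      now apply small0. }
    exists (fun ab => 0 < fst ab < d /\ snd ab = 1). split.
    + apply Filter_prod with (fun a => 0 < a < d) (fun b => b = 1).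
      * exists (mkposreal d Hd0). intros y Hy Hp. simpl in *.
        change (Rabs (y - 0) < d) in Hy. apply Rabs_def2 in Hy. lra.
      * reflexivity.
      * intros x y Hx Hy. simpl. auto.
    + intros [a b] [a' b'] [Ha Hb1] [Ha' Hb1'] u' v' Hu Hv. simpl in *. subst b b'.
      apply (is_RInt_unique (V:=R_CompleteNormedModule)) in Hu. apply (is_RInt_unique (V:=R_CompleteNormedModule)) in Hv. subst u' v'.
      change (Rabs (RInt f a' 1 - RInt f a 1) < eps).
      rewrite Rabs_diff_chasles by (auto; lra). rewrite Rabs_Ropp.
      apply Rle_lt_trans with (C * Rpower d (q+1)); auto.
      apply (RInt_sym_bound f (fun x => 0 < x < d)); auto; try tauto.
      intros x y Hx Hy Hxy. eapply Rle_trans. apply (bound0 f A q x y); auto. lra.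
      intros t Ht. apply Hb. lra.
      apply Rmult_le_compat_l. auto. apply Rle_Rpower_l; lra.
Qed.

Lemma ex_geninf (f : R -> R) B : 0 <= B ->
  (forall t, 0 < t -> continuous f t) ->
  (forall t, 1 <= t -> Rabs (f t) <= B * exp (- t / 2)) ->
  ex_RInt_gen f (at_point 1) (Rbar_locally p_infty).
Proof.
  intros HB Hc Hb. unfold ex_RInt_gen, is_RInt_gen.
  apply (@filterlimi_locally_cauchy _ R_CompleteSpace _
     (@filter_prod_proper _ _ _ _ (at_point_filter 1) (Rbar_locally_filter p_infty))).
  - apply Filter_prod with (fun a => a = 1) (fun b => 0 < b).
    + reflexivity.
    + exists 0. auto.
    + intros x y Hx Hy. subst x. simpl. split.
      * exists (RInt f 1 y). apply (RInt_correct (V:=R_CompleteNormedModule)). apply exR; auto; lra.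
      * intros y1 y2 H1 H2. apply (is_RInt_unique (V:=R_CompleteNormedModule)) in H1. apply (is_RInt_unique (V:=R_CompleteNormedModule)) in H2. congruence.
  - intros [eps Heps]. simpl. set (M := 1 + 4 * B / eps).
    assert (HM1 : 1 <= M) by (unfold M; assert (0 <= 4 * B / eps) by (apply Rdiv_le_0_compat; lra); lra).
    assert (HMe : 2 * B * exp (- M / 2) < eps).
    { pose proof (exp_ineq1_le (M/2)) as H1.
      replace (- M / 2) with (- (M/2)) by field. rewrite exp_Ropp.
      assert (0 < exp (M/2)) by apply exp_pos.
      apply (Rmult_lt_reg_r (exp (M/2))). auto.
      rewrite Rmult_assoc, Rinv_l by lra. rewrite Rmult_1_r.
      assert (2 * B < eps * (1 + M/2)).
      { unfold M. replace (eps * (1 + (1 + 4 * B / eps) / 2)) with (3/2 * eps + 2 * B) by (field; repeat split; lra). lra. }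
      assert (eps * (1 + M / 2) <= eps * exp (M / 2)) by (apply Rmult_le_compat_l; lra).
      lra. }
    exists (fun ab => fst ab = 1 /\ M < snd ab). split.
    + apply Filter_prod with (fun a => a = 1) (fun b => M < b).
      * reflexivity.
      * exists M. auto.
      * intros x y Hx Hy. simpl. auto.
    + intros [a b] [a' b'] [Ha Hb1] [Ha' Hb1'] u' v' Hu Hv. simpl in *. subst a a'.
      apply (is_RInt_unique (V:=R_CompleteNormedModule)) in Hu. apply (is_RInt_unique (V:=R_CompleteNormedModule)) in Hv. subst u' v'.
      change (Rabs (RInt f 1 b' - RInt f 1 b) < eps).
      replace (RInt f 1 b' - RInt f 1 b) with (RInt f b b').
      2:{ pose proof (RInt_Chasles f 1 b b' (exR f 1 b Hc ltac:(lra) ltac:(lra)) (exR f b b' Hc ltac:(lra) ltac:(lra))) as HC.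
          change (RInt f 1 b + RInt f b b' = RInt f 1 b') in HC. lra. }
      apply Rle_lt_trans with (2 * B * exp (- M / 2)); auto.
      apply (RInt_sym_bound f (fun x => M < x)); auto; try (intros; lra).
      intros x y Hx Hy Hxy. eapply Rle_trans. apply (boundinf f B x y); auto. lra.
      intros t Ht. apply Hb. lra.
      apply Rmult_le_compat_l. lra. apply exp_le_mono. lra.
Qed.

Lemma ex_gen (f : R -> R) A B q : -1 < q -> 0 <= A -> 0 <= B ->
  (forall t, 0 < t -> continuous f t) ->
  (forall t, 0 < t <= 1 -> Rabs (f t) <= A * Rpower t q) ->
  (forall t, 1 <= t -> Rabs (f t) <= B * exp (- t / 2)) ->
  ex_RInt_gen f (at_right 0) (Rbar_locally p_infty).
Proof.
  intros. apply (ex_RInt_gen_Chasles f 1).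
  now apply (ex_gen0 f A q). now apply (ex_geninf f B).
Qed.

Lemma ln_le_xm1 x : 0 < x -> ln x <= x - 1.
Proof. intro H. pose proof (exp_ineq1_le (ln x)). rewrite exp_ln in H0 by auto. lra. Qed.

Lemma qlog q : exists C, forall t, 1 <= t -> q * ln t <= t / 2 + C.
Proof.
  set (m := 2 * Rabs q + 1).
  assert (Hm : 1 <= m) by (unfold m; pose proof (Rabs_pos q); lra).
  exists (Rabs q * ln m). intros t Ht.
  assert (Hlt : 0 <= ln t).
  { destruct (Req_dec t 1) as [E|E]. subst; rewrite ln_1; lra. left. rewrite <- ln_1. apply ln_increasing; lra. }
  assert (Hl : ln t = ln (t / m) + ln m).
  { rewrite <- ln_mult. f_equal. field. lra. apply Rdiv_lt_0_compat; lra. lra. }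
  assert (H1 : ln (t / m) <= t / m - 1) by (apply ln_le_xm1; apply Rdiv_lt_0_compat; lra).
  assert (Hqa : q * ln t <= Rabs q * ln t).
  { apply Rmult_le_compat_r; auto. apply Rle_abs. }
  assert (Hqb : Rabs q * ln (t/m) <= Rabs q * (t/m)).
  { apply Rmult_le_compat_l. apply Rabs_pos. lra. }
  assert (Hqc : Rabs q * (t / m) <= t / 2).
  { unfold m. pose proof (Rabs_pos q).
    replace (Rabs q * (t / (2 * Rabs q + 1))) with (t * (Rabs q / (2 * Rabs q + 1))) by (field; lra).
    replace (t/2) with (t * (1/2)) by field. apply Rmult_le_compat_l. lra.
    apply (Rmult_le_reg_r (2 * Rabs q + 1)). lra. unfold Rdiv. rewrite Rmult_assoc, Rinv_l by lra. lra. }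
  assert (Rabs q * ln t = Rabs q * ln (t/m) + Rabs q * ln m) by (rewrite Hl; ring). lra.
Qed.

Definition fJ (p s t : R) : R := Rpower t p * exp (- t ^ 2 / 2 + s * t).
Definition J (p s : R) : R := RInt_gen (fJ p s) (at_right 0) (Rbar_locally p_infty).

Lemma fJ_cont p s t : 0 < t -> continuous (fJ p s) t.
Proof.
  intro Ht. apply (@ex_derive_continuous R_AbsRing R_NormedModule (fJ p s)).
  unfold fJ, Rpower. auto_derive. auto.
Qed.

Lemma fJ_pos p s t : 0 < fJ p s t.
Proof. unfold fJ. apply Rmult_lt_0_compat. apply Rpower_pos. apply exp_pos. Qed.

Lemma J_ex p s : -1 < p -> ex_RInt_gen (fJ p s) (at_right 0) (Rbar_locally p_infty).
Proof.
  intro Hp. destruct (qlog p) as [C HC].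
  set (K := Rabs s + 1).
  apply (ex_gen (fJ p s) (exp (Rabs s)) (exp (C + K ^ 2 / 2)) p); auto.
  - left; apply exp_pos.
  - left; apply exp_pos.
  - apply fJ_cont.
  - intros t Ht. rewrite Rabs_right by (left; apply fJ_pos). unfold fJ.
    rewrite Rmult_comm. apply Rmult_le_compat_r. left; apply Rpower_pos.
    apply exp_le_mono. assert (s * t <= Rabs s * t) by (apply Rmult_le_compat_r; [lra | apply Rle_abs]).
    assert (Rabs s * t <= Rabs s) by (rewrite <- (Rmult_1_r (Rabs s)) at 2; apply Rmult_le_compat_l; [apply Rabs_pos|lra]).
    assert (0 <= t ^ 2) by nra. lra.
  - intros t Ht. rewrite Rabs_right by (left; apply fJ_pos). unfold fJ, Rpower.
    rewrite <- !exp_plus. apply exp_le_mono. specialize (HC t Ht).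
    assert (s * t <= Rabs s * t) by (apply Rmult_le_compat_r; [lra | apply Rle_abs]).
    assert (0 <= (t - K) ^ 2) by apply pow2_ge_0. unfold K in *. nra.
Qed.

Lemma J_is p s : -1 < p -> is_RInt_gen (fJ p s) (at_right 0) (Rbar_locally p_infty) (J p s).
Proof. intro Hp. apply (RInt_gen_correct (V:=R_CompleteNormedModule)). now apply J_ex. Qed.

Lemma expbound u : 0 <= exp u - 1 - u <= u ^ 2 * exp (Rabs u).
Proof.
  pose proof (exp_ineq1_le u) as H1.
  pose proof (exp_ineq1_le (- u)) as H2.
  assert (He : exp (- u) * exp u = 1) by (rewrite <- exp_plus; replace (-u+u) with 0 by ring; apply exp_0).
  assert (Hp : 0 < exp u) by apply exp_pos.
  assert (H3 : exp u - 1 - u <= u * (exp u - 1)).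
  { assert (exp u * (1 - u) <= 1) by nra. nra. }
  split. lra. eapply Rle_trans. apply H3.
  destruct (Rle_lt_dec 0 u) as [h|h].
  - rewrite Rabs_right by lra. assert (exp u * (1 - u) <= 1) by nra.
    assert (exp u - 1 <= u * exp u) by nra. nra.
  - rewrite Rabs_left by lra. assert (1 <= exp (-u)) by lra. nra.
Qed.

Lemma fJ_shift p s h t : 0 < t -> fJ p (s + h) t = fJ p s t * exp (h * t).
Proof. intro. unfold fJ. rewrite Rmult_assoc, <- exp_plus. f_equal. f_equal. ring. Qed.

Lemma fJ_p1 p s t : 0 < t -> fJ (p + 1) s t = fJ p s t * t.
Proof. intro. unfold fJ. rewrite Rpower_plus, Rpower_1 by auto. ring. Qed.

Lemma fJ_p2 p s t : 0 < t -> fJ (p + 2) (s + 1) t = fJ p s t * t ^ 2 * exp t.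
Proof.
  intro. unfold fJ. replace 2 with (1 + 1) at 1 by ring. rewrite <- Rplus_assoc, !Rpower_plus, Rpower_1 by auto.
  replace (- t ^ 2 / 2 + (s + 1) * t) with ((- t ^ 2 / 2 + s * t) + t) by ring. rewrite exp_plus. ring.
Qed.

Lemma J_taylor p s h : -1 < p -> Rabs h <= 1 ->
  Rabs (J p (s + h) - J p s - h * J (p + 1) s) <= h ^ 2 * J (p + 2) (s + 1).
Proof.
  intros Hp Hh.
  pose proof (is_RInt_gen_minus _ _ _ _ (J_is p (s + h) Hp) (J_is p s Hp)) as H1.
  pose proof (is_RInt_gen_scal (Fa := at_right 0) (Fb := Rbar_locally p_infty) _ h _ (J_is (p + 1) s ltac:(lra))) as H2.
  pose proof (is_RInt_gen_minus (Fa := at_right 0) (Fb := Rbar_locally p_infty) _ _ _ _ H1 H2) as H3.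
  pose proof (is_RInt_gen_scal (Fa := at_right 0) (Fb := Rbar_locally p_infty) _ (h ^ 2) _ (J_is (p + 2) (s + 1) ltac:(lra))) as H4.
  refine (RInt_gen_norm _ _ _ _ (FP _ _) (FP _ _) H3 H4).
  - intros a b Ha Hb. simpl. lra.
  - intros a b Ha Hb x Hx. simpl in Hx.
    change (Rabs (fJ p (s + h) x - fJ p s x - h * fJ (p + 1) s x) <= h ^ 2 * fJ (p + 2) (s + 1) x).
    assert (Hx0 : 0 < x) by lra.
    rewrite fJ_shift, fJ_p1, fJ_p2 by auto.
    pose proof (expbound (h * x)) as [E1 E2].
    pose proof (fJ_pos p s x) as F.
    replace (fJ p s x * exp (h * x) - fJ p s x - h * (fJ p s x * x)) with (fJ p s x * (exp (h * x) - 1 - h * x)) by ring.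
    rewrite Rabs_right by nra.
    assert (exp (Rabs (h * x)) <= exp x).
    { apply exp_le_mono. rewrite Rabs_mult, (Rabs_right x) by lra.
      rewrite <- (Rmult_1_l x) at 2. apply Rmult_le_compat_r; lra. }
    assert (0 <= (h * x) ^ 2) by apply pow2_ge_0.
    assert ((h * x) ^ 2 * exp (Rabs (h * x)) <= (h * x) ^ 2 * exp x) by (apply Rmult_le_compat_l; auto).
    replace (h ^ 2 * (fJ p s x * x ^ 2 * exp x)) with (fJ p s x * ((h * x) ^ 2 * exp x)) by ring.
    apply Rmult_le_compat_l. lra. lra.
Qed.

Lemma J_deriv p s : -1 < p -> is_derive (J p) s (J (p + 1) s).
Proof.
  intro Hp. apply is_derive_Reals. intros eps Heps.
  set (M := Rabs (J (p + 2) (s + 1))).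
  assert (HM : 0 <= M) by apply Rabs_pos.
  assert (Hd : 0 < Rmin 1 (eps / (M + 1))) by (apply Rmin_pos; [lra | apply Rdiv_lt_0_compat; lra]).
  exists (mkposreal _ Hd). intros h Hh0 Hh. simpl in Hh.
  assert (Hh1 : Rabs h <= 1) by (pose proof (Rmin_l 1 (eps / (M + 1))); lra).
  assert (Hh2 : Rabs h < eps / (M + 1)) by (pose proof (Rmin_r 1 (eps / (M + 1))); lra).
  pose proof (J_taylor p s h Hp Hh1) as T.
  assert (Hah : 0 < Rabs h) by (apply Rabs_pos_lt; auto).
  replace ((J p (s + h) - J p s) / h - J (p + 1) s) with ((J p (s + h) - J p s - h * J (p + 1) s) / h) by (field; auto).
  rewrite Rabs_div by auto.
  apply (Rmult_lt_reg_r (Rabs h)); auto. unfold Rdiv. rewrite Rmult_assoc, Rinv_l, Rmult_1_r by lra.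
  assert (h ^ 2 * J (p + 2) (s + 1) <= Rabs h * Rabs h * M).
  { unfold M. replace (h ^ 2) with (Rabs h * Rabs h). 2:{ rewrite <- Rabs_mult. rewrite Rabs_right. ring. nra. }
    apply Rmult_le_compat_l. nra. apply Rle_abs. }
  assert (Rabs h * M < eps).
  { apply Rle_lt_trans with (Rabs h * (M + 1)). nra.
    apply (Rmult_lt_reg_r (/ (M + 1))). apply Rinv_0_lt_compat; lra.
    rewrite Rmult_assoc, Rinv_r, Rmult_1_r by lra. exact Hh2. }
  nra.
Qed.

Lemma LB (h : R -> R) l : (forall t, 0 < t -> 0 <= h t) ->
  is_RInt_gen h (at_right 0) (Rbar_locally p_infty) l -> RInt h 1 2 <= l.
Proof.
  intros Hpos Hl. apply Rnot_lt_le. intro Hlt.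
  assert (He : 0 < RInt h 1 2 - l) by lra.
  unfold is_RInt_gen in Hl. rewrite filterlimi_locally in Hl.
  destruct (EX _ (Hl (mkposreal _ He))) as [a [b [Ha [Hb [z [Hz Hb2]]]]]].
  simpl in Hz, Hb2. change (Rabs (z - l) < RInt h 1 2 - l) in Hb2.
  assert (Ex : ex_RInt h a b) by (exists z; exact Hz).
  apply (is_RInt_unique (V:=R_CompleteNormedModule)) in Hz.
  assert (E1 : ex_RInt h a 1) by (apply (ex_RInt_Chasles_1 h a 1 b); auto; lra).
  assert (E2 : ex_RInt h 1 b) by (apply (ex_RInt_Chasles_2 h a 1 b); auto; lra).
  assert (E3 : ex_RInt h 1 2) by (apply (ex_RInt_Chasles_1 h 1 2 b); auto; lra).
  assert (E4 : ex_RInt h 2 b) by (apply (ex_RInt_Chasles_2 h 1 2 b); auto; lra).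
  pose proof (RInt_Chasles h a 1 b E1 E2) as C1.
  pose proof (RInt_Chasles h 1 2 b E3 E4) as C2.
  change (RInt h a 1 + RInt h 1 b = RInt h a b) in C1.
  change (RInt h 1 2 + RInt h 2 b = RInt h 1 b) in C2.
  assert (0 <= RInt h a 1) by (apply RInt_ge_0; auto; try lra; intros; apply Hpos; lra).
  assert (0 <= RInt h 2 b) by (apply RInt_ge_0; auto; try lra; intros; apply Hpos; lra).
  apply Rabs_def2 in Hb2. lra.
Qed.

Lemma RInt_pos12 (h : R -> R) : (forall t, 0 < t -> continuous h t) -> (forall t, 0 < t -> 0 < h t) ->
  0 < RInt h 1 2.
Proof.
  intros Hc Hp.
  assert (H0 : RInt (fun _ : R => 0) 1 2 = 0). { rewrite RInt_const. change ((2-1)*0 = 0). ring. }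
  rewrite <- H0.
  apply RInt_lt. lra. intros; apply Hc; lra. intros; apply continuous_const. intros; apply Hp; lra.
Qed.

Lemma comb2 (f1 f2 : R -> R) l1 l2 a b :
  is_RInt_gen f1 (at_right 0) (Rbar_locally p_infty) l1 ->
  is_RInt_gen f2 (at_right 0) (Rbar_locally p_infty) l2 ->
  is_RInt_gen (fun t => a * f1 t + b * f2 t) (at_right 0) (Rbar_locally p_infty) (a * l1 + b * l2).
Proof.
  intros H1 H2.
  exact (is_RInt_gen_plus (Fa := at_right 0) (Fb := Rbar_locally p_infty) _ _ _ _
    (is_RInt_gen_scal (Fa := at_right 0) (Fb := Rbar_locally p_infty) _ a _ H1)
    (is_RInt_gen_scal (Fa := at_right 0) (Fb := Rbar_locally p_infty) _ b _ H2)).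
Qed.

Definition Gf (q s0 s : R) := J q s - (s - s0) * J (q + 1) s.

Lemma G_is q s0 s : -1 < q ->
  is_RInt_gen (fun t => 1 * fJ q s t + (- (s - s0)) * fJ (q + 1) s t) (at_right 0) (Rbar_locally p_infty) (Gf q s0 s).
Proof.
  intro Hq. replace (Gf q s0 s) with (1 * J q s + (- (s - s0)) * J (q + 1) s) by (unfold Gf; ring).
  apply comb2; apply J_is; lra.
Qed.

Lemma cont_comb (f1 f2 : R -> R) a b t : continuous f1 t -> continuous f2 t ->
  continuous (fun t => a * f1 t + b * f2 t) t.
Proof.
  intros H1 H2. apply (continuous_plus (fun t => a * f1 t) (fun t => b * f2 t)).
  apply (continuous_scal_r a f1); auto. apply (continuous_scal_r b f2); auto.
Qed.

Lemma G1 q s0 s : -1 < q -> s <= s0 -> 0 < Gf q s0 s.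
Proof.
  intros Hq Hs. pose proof (G_is q s0 s Hq) as H.
  assert (Hp : forall t, 0 < t -> 0 < 1 * fJ q s t + - (s - s0) * fJ (q + 1) s t).
  { intros t Ht. rewrite fJ_p1 by auto. pose proof (fJ_pos q s t).
    assert (0 <= (s0 - s) * t) by (apply Rmult_le_pos; lra).
    replace (1 * fJ q s t + - (s - s0) * (fJ q s t * t)) with (fJ q s t * (1 + (s0 - s) * t)) by ring.
    apply Rmult_lt_0_compat; lra. }
  eapply Rlt_le_trans. 2: apply (LB _ _ (fun t Ht => Rlt_le _ _ (Hp t Ht)) H).
  apply RInt_pos12; auto. intros t Ht. apply cont_comb; apply fJ_cont; auto.
Qed.

Lemma Dpos q s0 s1 s2 t : s0 <= s1 < s2 -> 0 < t ->
  0 < fJ q (s1 + (s2 - s1)) t * (exp ((s1 - s2) * t) - 1 - (s1 - s2) * t).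
Proof.
  intros Hs Ht. apply Rmult_lt_0_compat. apply fJ_pos.
  pose proof (exp_ineq1 ((s1 - s2) * t)). assert ((s1 - s2) * t <> 0) by nra.
  specialize (H H0). lra.
Qed.

Lemma G2 q s0 s1 s2 : -1 < q -> s0 <= s1 < s2 -> Gf q s0 s2 < Gf q s0 s1.
Proof.
  intros Hq Hs.
  pose proof (comb2 _ _ _ _ 1 (-1) (G_is q s0 s1 Hq) (G_is q s0 s2 Hq)) as H.
  set (h := fun t => 1 * (1 * fJ q s1 t + - (s1 - s0) * fJ (q + 1) s1 t) +
        -1 * (1 * fJ q s2 t + - (s2 - s0) * fJ (q + 1) s2 t)) in H.
  assert (Hp : forall t, 0 < t -> 0 < h t).
  { intros t Ht. unfold h. rewrite !fJ_p1 by auto.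
    assert (Y : fJ q s1 t = fJ q s2 t * exp ((s1 - s2) * t)).
    { rewrite <- fJ_shift by auto. f_equal. ring. }
    rewrite Y.
    pose proof (fJ_pos q s2 t) as X.
    set (u := (s1 - s2) * t). assert (Hu : u < 0) by (unfold u; nra).
    pose proof (exp_ineq1 u ltac:(lra)) as E1.
    assert (E2 : exp u < 1) by (rewrite <- exp_0; apply exp_increasing; lra).
    assert (0 <= (s1 - s0) * t) by nra.
    replace (1 * (1 * (fJ q s2 t * exp u) + - (s1 - s0) * (fJ q s2 t * exp u * t)) +
       -1 * (1 * fJ q s2 t + - (s2 - s0) * (fJ q s2 t * t)))
     with (fJ q s2 t * (exp u - 1 - u) + (s1 - s0) * t * fJ q s2 t * (1 - exp u)) by (unfold u; ring).
    assert (0 < fJ q s2 t * (exp u - 1 - u)) by (apply Rmult_lt_0_compat; lra).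
    assert (0 <= (s1 - s0) * t * fJ q s2 t * (1 - exp u)).
    { apply Rmult_le_pos. apply Rmult_le_pos; lra. lra. }
    lra. }
  assert (0 < 1 * Gf q s0 s1 + -1 * Gf q s0 s2).
  { eapply Rlt_le_trans. 2: apply (LB _ _ (fun t Ht => Rlt_le _ _ (Hp t Ht)) H).
    apply RInt_pos12; auto. intros t Ht. unfold h. apply cont_comb; apply cont_comb; apply fJ_cont; auto. }
  lra.
Qed.

Lemma LBpos (h : R -> R) l : (forall t, 0 < t -> continuous h t) -> (forall t, 0 < t -> 0 < h t) ->
  is_RInt_gen h (at_right 0) (Rbar_locally p_infty) l -> 0 < l.
Proof.
  intros Hc Hp H. eapply Rlt_le_trans. 2: apply (LB _ _ (fun t Ht => Rlt_le _ _ (Hp t Ht)) H).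
  apply RInt_pos12; auto.
Qed.

Lemma J1_lower q s : -1 < q -> 0 <= s -> exp (s - 2) <= J (q + 1) s.
Proof.
  intros Hq Hs.
  eapply Rle_trans. 2: apply (LB _ _ (fun t Ht => Rlt_le _ _ (fJ_pos (q+1) s t)) (J_is (q+1) s ltac:(lra))).
  assert (H0 : RInt (fun _ : R => exp (s - 2)) 1 2 = exp (s - 2)).
  { rewrite RInt_const. change ((2-1) * exp (s - 2) = exp (s - 2)). ring. }
  rewrite <- H0 at 1. apply RInt_le. lra. apply ex_RInt_const. apply exR. apply fJ_cont. lra. lra.
  intros t Ht. unfold fJ.
  assert (1 <= Rpower t (q + 1)).
  { unfold Rpower. apply Rle_trans with (exp 0); [rewrite exp_0; lra|]. apply exp_le_mono. apply Rmult_le_pos. lra.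
    destruct (Req_dec t 1) as [E|E]. rewrite E, ln_1; lra.
    left. rewrite <- ln_1. apply ln_increasing; lra. }
  assert (exp (s - 2) <= exp (- t ^ 2 / 2 + s * t)).
  { apply exp_le_mono. assert (t ^ 2 <= 4) by nra. assert (s <= s * t) by nra. lra. }
  assert (0 < exp (s - 2)) by apply exp_pos. nra.
Qed.

Lemma G3 q s0 : -1 < q -> exists s, s0 < s /\ Gf q s0 s < 0.
Proof.
  intros Hq. set (s1 := s0 + 1).
  set (C := Gf q s0 s1 + J (q + 1) s1).
  set (s := Rmax (s0 + 2) (Rabs C + 3)).
  assert (Hs1 : s0 + 2 <= s) by apply Rmax_l.
  assert (Hs2 : Rabs C + 3 <= s) by apply Rmax_r.
  pose proof (Rabs_pos C). pose proof (Rle_abs C).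
  exists s. split. lra.
  pose proof (comb2 _ _ _ _ 1 1
     (comb2 _ _ _ _ 1 (-1) (G_is q s0 s1 Hq) (G_is q s0 s Hq))
     (comb2 _ _ _ _ (-1) 1 (J_is (q+1) s ltac:(lra)) (J_is (q+1) s1 ltac:(lra)))) as HI.
  cbv beta in HI.
  apply LBpos in HI.
  2:{ intros t Ht. apply cont_comb; apply cont_comb; try apply cont_comb; apply fJ_cont; auto. }
  2:{ intros t Ht. rewrite !fJ_p1 by auto.
    assert (Y : fJ q s1 t = fJ q s t * exp ((s1 - s) * t)).
    { rewrite <- fJ_shift by auto. f_equal. ring. }
    rewrite Y. pose proof (fJ_pos q s t) as X.
    set (u := (s1 - s) * t). assert (Hu : u < 0) by (unfold u, s1; nra).
    pose proof (exp_ineq1 u ltac:(lra)) as E1.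
    replace (1 * (1 * (1 * (fJ q s t * exp u) + - (s1 - s0) * (fJ q s t * exp u * t)) +
      -1 * (1 * fJ q s t + - (s - s0) * (fJ q s t * t))) +
      1 * (-1 * (fJ q s t * t) + 1 * (fJ q s t * exp u * t)))
     with (fJ q s t * (exp u - 1 - u)) by (unfold u, s1; ring).
    apply Rmult_lt_0_compat; lra. }
  pose proof (J1_lower q s Hq ltac:(lra)).
  pose proof (exp_ineq1_le (s - 2)).
  unfold C in *. lra.
Qed.

Lemma G_exd q s0 x : -1 < q -> ex_derive (Gf q s0) x.
Proof.
  intro Hq. unfold Gf. apply (ex_derive_minus (fun s => J q s) (fun s => (s - s0) * J (q + 1) s)).
  - eexists. apply J_deriv. lra.
  - apply (ex_derive_mult (fun s => s - s0) (fun s => J (q + 1) s)).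
    + auto_derive. auto.
    + eexists. apply J_deriv. lra.
Qed.

Lemma G_unique q s0 : -1 < q -> exists! s, Gf q s0 s = 0.
Proof.
  intro Hq. destruct (G3 q s0 Hq) as [s3 [Hs3 Hg3]].
  pose proof (G1 q s0 s0 Hq (Rle_refl _)) as Hg0.
  assert (Hc : continuity (fun s => - Gf q s0 s)).
  { intro x. apply continuity_pt_opp. apply continuity_pt_filterlim.
    apply (@ex_derive_continuous R_AbsRing R_NormedModule (Gf q s0)). now apply G_exd. }
  destruct (IVT (fun s => - Gf q s0 s) s0 s3 Hc Hs3 ltac:(lra) ltac:(lra)) as [z [Hz1 Hz2]].
  exists z. split. lra.
  intros y Hy.
  assert (s0 < z). { destruct (Rle_lt_dec z s0). pose proof (G1 q s0 z Hq r). lra. auto. }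
  assert (s0 < y). { destruct (Rle_lt_dec y s0). pose proof (G1 q s0 y Hq r). lra. auto. }
  destruct (Rtotal_order z y) as [h|[h|h]]; auto.
  - pose proof (G2 q s0 z y Hq ltac:(lra)). lra.
  - pose proof (G2 q s0 y z Hq ltac:(lra)). lra.
Qed.

Lemma Gamma_pos s : 0 < s -> 0 < Gamma s.
Proof.
  intro Hs. unfold Gamma.
  set (g := fun t => Rpower t (s - 1) * exp (- t)).
  assert (Hc : forall t, 0 < t -> continuous g t).
  { intros t Ht. apply (@ex_derive_continuous R_AbsRing R_NormedModule g).
    unfold g, Rpower. auto_derive. auto. }
  assert (Hp : forall t, 0 < t -> 0 < g t).
  { intros t Ht. unfold g. apply Rmult_lt_0_compat. apply Rpower_pos. apply exp_pos. }
  destruct (qlog (s - 1)) as [C HC].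
  assert (E : ex_RInt_gen g (at_right 0) (Rbar_locally p_infty)).
  { apply (ex_gen g 1 (exp C) (s - 1)); auto; try lra.
    - left; apply exp_pos.
    - intros t Ht. rewrite Rabs_right by (left; apply Hp; lra). unfold g.
      rewrite Rmult_1_l. rewrite <- (Rmult_1_r (Rpower t (s - 1))) at 2.
      apply Rmult_le_compat_l. left; apply Rpower_pos.
      apply Rle_trans with (exp 0); [apply exp_le_mono; lra | rewrite exp_0; lra].
    - intros t Ht. rewrite Rabs_right by (left; apply Hp; lra). unfold g, Rpower.
      rewrite <- !exp_plus. apply exp_le_mono. specialize (HC t Ht). lra. }
  apply (LBpos g); auto. apply (RInt_gen_correct (V:=R_CompleteNormedModule)). exact E.
Qed.

Lemma psi_eq mu kappa sigma rho x : 0 < kappa -> 0 < sigma ->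
  psi mu kappa sigma rho x =
  / Gamma (- (- rho / kappa)) * J (- (- rho / kappa) - 1) (sqrt (2 * kappa) / sigma * (x - mu)).
Proof.
  intros Hk Hs. unfold psi, Dpc, J.
  match goal with |- context [RInt_gen ?f _ _] =>
    replace f with (fJ (- (- rho / kappa) - 1) (sqrt (2 * kappa) / sigma * (x - mu))) end.
  2:{ apply functional_extensionality. intro t. unfold fJ. f_equal. f_equal. field. lra. }
  set (I := RInt_gen _ _ _).
  replace (- (- ((x - mu) / sigma) * sqrt (2 * kappa)) ^ 2 / 4) with (- (kappa * (x - mu) ^ 2 / (2 * sigma ^ 2))).
  2:{ replace ((- ((x - mu) / sigma) * sqrt (2 * kappa)) ^ 2) with (((x - mu) / sigma) ^ 2 * sqrt (2 * kappa) ^ 2) by ring.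
      rewrite pow2_sqrt by lra. field. lra. }
  rewrite exp_Ropp. assert (0 < exp (kappa * (x - mu) ^ 2 / (2 * sigma ^ 2))) by apply exp_pos.
  unfold Rdiv. rewrite <- !Rmult_assoc, Rinv_r, Rmult_1_l by lra. reflexivity.
Qed.

Lemma psi_deriv mu kappa sigma rho x : 0 < kappa -> 0 < sigma -> 0 < rho ->
  is_derive (psi mu kappa sigma rho) x
    (/ Gamma (- (- rho / kappa)) * (sqrt (2 * kappa) / sigma * J (- (- rho / kappa) - 1 + 1) (sqrt (2 * kappa) / sigma * (x - mu)))).
Proof.
  intros Hk Hs Hr.
  apply (is_derive_ext (fun x => / Gamma (- (- rho / kappa)) * J (- (- rho / kappa) - 1) (sqrt (2 * kappa) / sigma * (x - mu)))).
  { intro t. symmetry. apply psi_eq; auto. }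
  apply is_derive_scal.
  apply (is_derive_comp (J (- (- rho / kappa) - 1)) (fun x => sqrt (2 * kappa) / sigma * (x - mu))).
  - apply J_deriv. assert (0 < rho / kappa) by (apply Rdiv_lt_0_compat; auto). lra.
  - auto_derive. auto. ring.
Qed.

Theorem lemma4p2 (mu kappa sigma rho beta c ybar : R)
  (Hkappa : 0 < kappa) (Hsigma : 0 < sigma) (Hrho : 0 < rho)
  (Hbeta : 0 < beta) (Hc : 0 <= c) (Hybar : 0 < ybar) :
  exists! xt : R, Hfun mu kappa sigma rho beta c ybar xt = 0.
Proof.
  set (q := - (- rho / kappa) - 1).
  assert (Hq : -1 < q) by (unfold q; assert (0 < rho / kappa) by (apply Rdiv_lt_0_compat; auto); lra).
  set (a := sqrt (2 * kappa) / sigma).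
  assert (Ha : 0 < a) by (unfold a; apply Rdiv_lt_0_compat; auto; apply sqrt_lt_R0; lra).
  set (Gm := Gamma (- (- rho / kappa))).
  assert (HG : 0 < Gm) by (unfold Gm; apply Gamma_pos; assert (0 < rho / kappa) by (apply Rdiv_lt_0_compat; auto); lra).
  set (x0 := (c * rho * (rho + kappa) - mu * kappa + beta * (rho + 2 * kappa) * ybar) / rho).
  set (s0 := a * (x0 - mu)).
  assert (Key : forall x, Hfun mu kappa sigma rho beta c ybar x = / Gm / (rho + kappa) * Gf q s0 (a * (x - mu))).
  { intro x. unfold Hfun.
    rewrite (is_derive_unique _ _ _ (psi_deriv mu kappa sigma rho x Hkappa Hsigma Hrho)).
    rewrite psi_eq by auto. fold q a Gm. unfold Gf, Rtilde, s0, x0.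
    field. repeat split; lra. }
  destruct (G_unique q s0 Hq) as [z [Hz Hu]].
  exists (mu + z / a). split.
  - rewrite Key. replace (a * (mu + z / a - mu)) with z by (field; lra). rewrite Hz. ring.
  - intros y Hy. rewrite Key in Hy.
    assert (Hne : / Gm / (rho + kappa) <> 0).
    { unfold Rdiv. apply Rmult_integral_contrapositive. split; apply Rinv_neq_0_compat; lra. }
    apply Rmult_integral in Hy. destruct Hy as [Hy|Hy]. contradiction.
    apply Hu in Hy. rewrite Hy. field. lra.
Qed.
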